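(* Let $\mathbb{V}=(V,S)$ be a finite hypergraph with intersection graph $\mathbb{I}=(S,E)$, let $\mathbb{G}$ be an $E$-group compatible with $\mathbb{I}$, and let $\hat{\mathbb{V}}=(\hat V,\hat S)$ and $\pi$ be as defined in the context. Then $\pi:\hat V\to V$ is well defined and maps every hyperedge $[s,g]\in\hat S$ bijectively onto $s$. Moreover, if $N\ge3$ and $\mathbb{G}$ is $N$-acyclic over $\mathbb{I}$, then (a) the Gaifman graph of $\hat{\mathbb{V}}$ has no chordless cycle of length $n$ with $4\le n\le N$, and (b) every set of at most $N$ vertices of $\hat V$ that are pairwise adjacent in the Gaifman graph is contained in a single hyperedge of $\hat S$; i.e. every induced sub-hypergraph of $\hat{\mathbb{V}}$ on at most $N$ vertices is acyclic (chordal and conformal).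
   Context: A finite hypergraph $(V,S)$ has finite vertex set $V$ and set of hyperedges $S\subseteq\mathcal{P}(V)$. Its intersection graph has vertex set $S$ and edge set $E=\{\{s,s'\}: s\neq s',\ s\cap s'\neq\emptyset\}$, regarded as the $E$-graph $\mathbb{I}=(S,(R_e)_{e\in E})$ with $R_e=\{(s,s'),(s',s)\}$ for $e=\{s,s'\}$. An $E$-group is a group $\mathbb{G}$ with $E\subseteq\mathbb{G}$ generating it and each $e\in E$ satisfying $e\neq1$, $e^2=1$; $[e_1\cdots e_n]_{\mathbb{G}}=e_1\cdots e_n$. For an $E$-graph $(X,(R_e))$ (each $R_e$ symmetric, each vertex with at most one $R_e$-neighbour), $\pi_e$ swaps $R_e$-neighbours and fixes all other vertices, $\pi_{e_1\cdots e_n}=\pi_{e_n}\circ\cdots\circ\pi_{e_1}$; $\mathbb{G}$ is compatible with it if $[w]_{\mathbb{G}}=1$ implies $\pi_w=\mathrm{id}$. For $\alpha\subseteq E$, $s,t\in S$, $\alpha^*[\mathbb{I},s]$ is the set of $w=e_1\cdots e_n\in\alpha^*$ labelling a walk in $\mathbb{I}$ from $s$, $\alpha^*[\mathbb{I},s,t]$ those ending at $t$; $C[\mathbb{I},\alpha,s;g]=\{g[w]_{\mathbb{G}}:w\in\alpha^*[\mathbb{I},s]\}$. An $\mathbb{I}$-coset cycle of length $n\ge2$ is $(g_i,\alpha_i,s_i)_{i\in\mathbb{Z}_n}$, $\alpha_i\subsetneq E$, $s_i\in S$, with $g_{i+1}=g_i[w]_{\mathbb{G}}$ for some $w\in\alpha_i^*[\mathbb{I},s_i,s_{i+1}]$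 and $C[\mathbb{I},\alpha_i\cap\alpha_{i-1},s_i;g_i]\cap C[\mathbb{I},\alpha_i\cap\alpha_{i+1},s_{i+1};g_{i+1}]=\emptyset$; $\mathbb{G}$ is $N$-acyclic over $\mathbb{I}$ if there is no $\mathbb{I}$-coset cycle of length $2,\dots,N$. Covering: let $X=\{(v,s,g): s\in S,\ v\in s,\ g\in\mathbb{G}\}$ and let $\approx$ be the equivalence relation on $X$ generated by $(v,s,g)\approx(v,s',ge)$ for all $e=\{s,s'\}\in E$ with $v\in s\cap s'$. Put $\hat V=X/{\approx}$, $[s,g]=\{[(v,s,g)]: v\in s\}$, $\hat S=\{[s,g]: s\in S, g\in\mathbb{G}\}$, $\hat{\mathbb{V}}=(\hat V,\hat S)$ and $\pi([(v,s,g)])=v$. The Gaifman graph of a hypergraph joins two distinct vertices iff they lie in a common hyperedge; a chordless cycle of length $n$ is a sequence of $n$ distinct vertices in which consecutive ones (cyclically) are adjacent and no non-consecutive ones are adjacent. *)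

(* Defs.v *)
From mathcomp Require Import all_boot.
From Stdlib Require Import Relations.
Set Implicit Arguments.
Unset Strict Implicit.
Unset Printing Implicit Defensive.

Record group_law (G : Type) := GroupLaw {
  gmul : G -> G -> G;
  gone : G;
  ginv : G -> G;
  gmulA : forall x y z, gmul x (gmul y z) = gmul (gmul x y) z;
  gmul1g : forall x, gmul gone x = x;
  gmulVg : forall x, gmul (ginv x) x = gone
}.

Section Covers.
Variables (V : finType) (S : {set {set V}}).

Definition Eset : {set {set {set V}}} :=
  [set e | [exists s in S, exists s' in S,
     [&& s != s', s :&: s' != set0 & e == [set s; s']]]].

(* The other endpoint of e from t (meaningful when t \in e). *)
Definition other (e : {set {set V}}) (t : {set V}) : {set V} :=
  odflt t [pick u in e :\ t].

Definition pi_e (e : {set {set V}}) (t : {set V}) : {set V} :=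
  if t \in e then other e t else t.

Definition pi_word (w : seq {set {set V}}) (t : {set V}) : {set V} :=
  foldl (fun u e => pi_e e u) t w.

Fixpoint walk (s : {set V}) (w : seq {set {set V}}) : bool :=
  match w with
  | [::] => true
  | e :: w' => (s \in e) && walk (pi_e e s) w'
  end.

Variables (G : Type) (L : group_law G) (iota : {set {set V}} -> G).
(* iota e is the element of G corresponding to the generator e \in E. *)

Local Notation "x * y" := (gmul L x y).
Local Notation "1" := (gone L).

Definition geval (w : seq {set {set V}}) : G :=
  foldr (fun e acc => iota e * acc) 1 w.

Definition is_Egroup : Prop :=
  [/\ forall e e', e \in Eset -> e' \in Eset -> iota e = iota e' -> e = e',
      forall e, e \in Eset -> iota e <> 1,
      forall e, e \in Eset -> iota e * iota e = 1 &
      forall g : G, exists w, all (fun e => e \in Eset) w /\ g = geval w].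

Definition compatible : Prop :=
  forall w, all (fun e => e \in Eset) w -> geval w = 1 ->
    forall t, t \in S -> pi_word w t = t.

Definition coset (a : {set {set {set V}}}) (s : {set V}) (g : G) (h : G) : Prop :=
  exists w, [/\ all (fun e => e \in a) w, walk s w & h = g * geval w].

(* I-coset cycle of length n, indexed by Z_n = 'I_n. *)
Definition coset_cycle (n : nat) (gs : 'I_n -> G)
    (als : 'I_n -> {set {set {set V}}}) (ss : 'I_n -> {set V}) : Prop :=
  2 <= n /\
  forall i : 'I_n,
  [/\ als i \proper Eset,
      ss i \in S,
      (exists w, [/\ all (fun e => e \in als i) w, walk (ss i) w,
                     pi_word w (ss i) = ss (ordS i) &
                     gs (ordS i) = gs i * geval w]) &
      (forall h, coset (als i :&: als (ord_pred i)) (ss i) (gs i) h ->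
                 coset (als i :&: als (ordS i)) (ss (ordS i)) (gs (ordS i)) h ->
                 False)].

Definition N_acyclic (N : nat) : Prop :=
  forall n, 2 <= n <= N ->
  forall gs als ss, ~ @coset_cycle n gs als ss.

Definition Xel := (V * {set V} * G)%type.
Definition inX (x : Xel) : Prop := x.1.2 \in S /\ x.1.1 \in x.1.2.

Definition xstep (x y : Xel) : Prop :=
  exists s', let: (v, s, g) := x in
    [/\ [set s; s'] \in Eset, v \in s, v \in s' &
        y = (v, s', g * iota [set s; s'])].

Definition approx : relation Xel := clos_refl_sym_trans Xel xstep.

(* projection pi([(v,s,g)]) = v, on representatives *)
Definition proj (x : Xel) : V := x.1.1.

(* membership of the vertex [x] in the hyperedge [s,g] = {[(v,s,g)] : v \in s} *)
Definition in_hedge (s : {set V}) (g : G) (x : Xel) : Prop :=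
  exists v, v \in s /\ approx x (v, s, g).

Definition gadj (x y : Xel) : Prop :=
  ~ approx x y /\ exists s g, s \in S /\ in_hedge s g x /\ in_hedge s g y.

Definition chordless_cycle (n : nat) (c : 'I_n -> Xel) : Prop :=
  [/\ forall i, inX (c i),
      forall i j, i != j -> ~ approx (c i) (c j),
      forall i, gadj (c i) (c (ordS i)) &
      forall i j, i != j -> j != ordS i -> i != ordS j -> ~ gadj (c i) (c j)].

End Covers.

(* Main.v *)
Require Import Defs.
From mathcomp Require Import all_boot.
From mathcomp Require Import all_boot zify.
From Stdlib Require Import Relations Classical IndefiniteDescription.
Set Implicit Arguments.
Unset Strict Implicit.
Unset Printing Implicit Defensive.

Lemma val_ordS n (j : 'I_n) : nat_of_ord (ordS j) = if j.+1 < n then j.+1 else 0.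
Proof.
rewrite /=; case: ifP => h; first by rewrite modn_small.
have -> : j.+1 = n by have := ltn_ord j; lia.
by rewrite modnn.
Qed.
Lemma ordS_facts n (j : 'I_n) : 4 <= n ->
  [/\ j != ordS (ordS j), ordS (ordS j) != ordS j & j != ordS (ordS (ordS j))].
Proof.
move=> n4; have jn := ltn_ord j.
move: (val_ordS j); case c1: (j.+1 < n) => h1;
move: (val_ordS (ordS j)); case c2: ((ordS j).+1 < n) => h2;
move: (val_ordS (ordS (ordS j))); case c3: ((ordS (ordS j)).+1 < n) => h3;
split; apply/eqP => /(congr1 (@nat_of_ord n)) H; lia.
Qed.

Lemma ord3_facts (i : 'I_3) :
  [/\ ordS (ordS (ordS i)) = i, ord_pred i = ordS (ordS i), i != ordS i,
      i != ordS (ordS i) & ordS i != ordS (ordS i)].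
Proof.
by case: i => [[|[|[|k]]] Hi] //; split => //; apply: val_inj.
Qed.

Section Grp.
Variables (G : Type) (L : group_law G).
Local Notation "x * y" := (gmul L x y).
Local Notation "1" := (gone L).
Lemma mulgV' (x : G) : x * ginv L x = 1.
Proof.
set y := ginv L x.
have e1 : ginv L y * y = 1 by apply: gmulVg.
rewrite -[x * y](gmul1g L) -e1 -gmulA (gmulA L y x y).
by rewrite /y gmulVg gmul1g.
Qed.
Lemma mulg1' (x : G) : x * 1 = x.
Proof. by rewrite -(gmulVg L x) gmulA mulgV' gmul1g. Qed.
Lemma mulg_cancel (g a b : G) : g * a = g * b -> a = b.
Proof. by move=> h; rewrite -(gmul1g L a) -(gmul1g L b) -(gmulVg L g) -!gmulA h. Qed.
End Grp.

Section Basics.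
Variables (V : finType) (S : {set {set V}}).
Variables (G : Type) (L : group_law G) (iota : {set {set V}} -> G).
Local Notation "x * y" := (gmul L x y).
Local Notation "1" := (gone L).
Local Notation Eset := (Eset S).
Local Notation geval := (geval L iota).
Implicit Types (B C : {set V}) (e : {set {set V}}) (w : seq {set {set V}}) (s t : {set V}).

Lemma EsetP e : reflect (exists a b, [/\ a \in S, b \in S, a != b, a :&: b != set0 & e = [set a; b]]) (e \in Eset).
Proof.
rewrite inE; apply: (iffP idP).
  case/existsP=> a /andP [aS] /existsP [b] /andP [bS] /and3P [ab ne /eqP ->].
  by exists a, b.
by case=> a [b] [aS bS ab ne ->]; apply/existsP; exists a; rewrite aS; apply/existsP; exists b; rewrite bS ab ne eqxx.
Qed.

Lemma other2 (a b : {set V}) : a != b -> other [set a; b] a = b.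
Proof.
move=> ab; rewrite /other.
case: pickP => [u|] /=.
  by rewrite !inE => /andP [ua /orP [/eqP uaE | /eqP //]]; rewrite uaE eqxx in ua.
by move/(_ b); rewrite !inE eqxx orbT andbT eq_sym ab.
Qed.

Lemma Eset_other e t : e \in Eset -> t \in e ->
  [/\ other e t \in e, other e t != t, e = [set t; other e t] & other e (other e t) = t].
Proof.
case/EsetP=> a [b] [_ _ ab _ ->] /set2P [] ->.
  have ba : b != a by rewrite eq_sym.
  rewrite other2 //; split => //; first by rewrite !inE eqxx orbT.
  by rewrite setUC other2.
have ba : b != a by rewrite eq_sym.
rewrite setUC other2 //; split => //.
  by rewrite !inE eqxx orbT.
by rewrite setUC other2.
Qed.

Lemma pi_e_invol e t : e \in Eset -> pi_e e (pi_e e t) = t.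
Proof.
move=> eE; rewrite /pi_e; case te: (t \in e); last by rewrite te.
by case: (Eset_other eE te) => -> _ _ ->.
Qed.

Lemma pi_e_in e t : e \in Eset -> t \in e -> pi_e e t \in e.
Proof. by move=> eE te; rewrite /pi_e te; case: (Eset_other eE te). Qed.

Lemma pi_word_cons e w t : pi_word (e :: w) t = pi_word w (pi_e e t).
Proof. by []. Qed.

Lemma pi_word_cat w1 w2 t : pi_word (w1 ++ w2) t = pi_word w2 (pi_word w1 t).
Proof. by rewrite /pi_word foldl_cat. Qed.

Lemma pi_word_rcons w e t : pi_word (rcons w e) t = pi_e e (pi_word w t).
Proof. by rewrite -cats1 pi_word_cat. Qed.

Lemma pi_word_revK w t : all (fun e => e \in Eset) w ->
  pi_word (rev w) (pi_word w t) = t.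
Proof.
elim: w t => [//|e w IH] t /= /andP [eE wE].
by rewrite rev_cons pi_word_rcons IH // pi_e_invol.
Qed.

Lemma pi_word_Krev w t : all (fun e => e \in Eset) w ->
  pi_word w (pi_word (rev w) t) = t.
Proof.
move=> wE; by rewrite -{1}(revK w) pi_word_revK // all_rev.
Qed.

Lemma walk_cat s w1 w2 : walk s (w1 ++ w2) = walk s w1 && walk (pi_word w1 s) w2.
Proof. by elim: w1 s => [//|e w1 IH] s /=; rewrite IH andbA. Qed.

Lemma walk_rev s w : all (fun e => e \in Eset) w -> walk s w -> walk (pi_word w s) (rev w).
Proof.
elim: w s => [//|e w IH] s /= /andP [eE wE] /andP [se ws].
rewrite rev_cons -cats1 walk_cat IH //= pi_word_revK // andbT.
exact: pi_e_in.
Qed.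

Lemma walk_S s w : s \in S -> all (fun e => e \in Eset) w -> walk s w -> pi_word w s \in S.
Proof.
elim: w s => [//|e w IH] s /= sS /andP [eE wE] /andP [se ws].
apply: IH => //; move: (pi_e_in eE se); case/EsetP: eE => a [b] [aS bS _ _ ->].
by rewrite !inE => /orP [] /eqP ->.
Qed.

Lemma geval_cat w1 w2 : geval (w1 ++ w2) = geval w1 * geval w2.
Proof.
elim: w1 => [|e w1 IH] /=; first by rewrite gmul1g.
by rewrite IH gmulA.
Qed.

Hypothesis Hinv : forall e, e \in Eset -> iota e * iota e = 1.

Lemma geval_revV w : all (fun e => e \in Eset) w -> geval w * geval (rev w) = 1.
Proof.
elim: w => [|e w IH] /=; first by rewrite gmul1g.
case/andP=> eE wE; rewrite rev_cons -cats1 geval_cat /= mulg1'.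
by rewrite -gmulA (gmulA L (geval w)) IH // (gmul1g L) Hinv.
Qed.


Definition alphaV (B : {set V}) : {set {set {set V}}} :=
  [set e in Eset | [forall t in e, B \subset t]].

Lemma alphaVP B e : reflect (e \in Eset /\ forall t, t \in e -> B \subset t) (e \in alphaV B).
Proof.
rewrite /alphaV [X in reflect _ X]in_set; apply: (iffP andP) => [[h /forallP h2]|[h h2]]; split => //.
  by move=> t te; move: (h2 t); rewrite te.
by apply/forallP => t; apply/implyP; apply: h2.
Qed.

Lemma alphaV_E B e : e \in alphaV B -> e \in Eset.
Proof. by case/alphaVP. Qed.

Lemma alphaV_all B w : all (fun e => e \in alphaV B) w -> all (fun e => e \in Eset) w.
Proof. by move=> /allP h; apply/allP => e /h /alphaV_E. Qed.

Lemma alphaV_mem B e t : e \in alphaV B -> t \in e -> B \subset t.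
Proof. by case/alphaVP => _ h /h. Qed.

Lemma alphaVU B C : alphaV (B :|: C) = alphaV B :&: alphaV C.
Proof.
apply/setP => e; rewrite in_setI; apply/alphaVP/andP.
  case=> eE h; split; apply/alphaVP; split => // t /h; rewrite subUset => /andP [] //.
case=> /alphaVP [eE h1] /alphaVP [_ h2]; split => // t te.
by rewrite subUset h1 ?h2.
Qed.

Lemma alphaV_mono B C : B \subset C -> alphaV C \subset alphaV B.
Proof.
move=> BC; apply/subsetP => e /alphaVP [eE h]; apply/alphaVP; split => // t /h.
exact: subset_trans.
Qed.

Lemma walk_sub B t w : B \subset t -> all (fun e => e \in alphaV B) w -> walk t w ->
  B \subset pi_word w t.
Proof.
elim: w t => [//|e w IH] t Bt /= /andP [eA wA] /andP [te wt].
by apply: IH => //; apply: (alphaV_mem eA); apply: pi_e_in (alphaV_E eA) te.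
Qed.

Definition Rw (x y : Xel V G) : Prop :=
  x.1.1 = y.1.1 /\ exists w, [/\ all (fun e => e \in alphaV [set x.1.1]) w, walk x.1.2 w,
    pi_word w x.1.2 = y.1.2 & y.2 = x.2 * geval w].

Lemma approx_R x y : approx S L iota x y -> Rw x y.
Proof.
elim=> {x y}.
- move=> [[v s] g] y [s' [eE vs vs' ->]] /=; split => //.
  have [a [b [_ _ ab _ eab]]] := EsetP _ eE.
  have ss' : s != s'.
    apply/eqP => ss; move: eE; rewrite -ss setUid => /EsetP [a' [b' [_ _ ab' _ e1]]].
    have : #|[set s]| = #|[set a'; b']| by rewrite e1.
    by rewrite cards1 cards2 ab'.
  exists [:: [set s; s']]; split => /=.
  + rewrite andbT; apply/alphaVP; split => // t /set2P [] ->; by rewrite sub1set.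
  + by rewrite !inE eqxx.
  + by rewrite /pi_e !inE eqxx /= other2.
  + by rewrite mulg1'.
- move=> x; split => //; exists [::]; split => //=; by rewrite mulg1'.
- move=> [[v s] g] [[v' s'] g'] _ [/= e1 [w [/= wA wk pw e2]]]; subst v' s' g'; split => //=.
  exists (rev w); split.
  + by rewrite all_rev.
  + by rewrite walk_rev // (alphaV_all wA).
  + by rewrite pi_word_revK // (alphaV_all wA).
  + by rewrite -gmulA geval_revV ?mulg1' // (alphaV_all wA).
- move=> [[v s] g] [[v' s'] g'] [[v'' s''] g''] _ [/= e1 [w [/= wA wk pw e2]]] _ [/= e3 [w' [/= wA' wk' pw' e4]]].
  subst v' s' g' v'' s'' g''; split => //=.
  exists (w ++ w'); split.
  + by rewrite all_cat wA wA'.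
  + by rewrite walk_cat wk.
  + by rewrite pi_word_cat.
  + by rewrite geval_cat gmulA.
Qed.

Lemma R_approx v s g w : all (fun e => e \in alphaV [set v]) w -> walk s w ->
  approx S L iota (v, s, g) (v, pi_word w s, g * geval w).
Proof.
elim: w s g => [|e w IH] s g /=.
  by move=> _ _; rewrite mulg1'; apply: rst_refl.
case/andP=> eA wA /andP [se wk].
apply: rst_trans (_ : approx S L iota (v, s, g) (v, pi_e e s, g * iota e)) _.
  apply: rst_step; exists (pi_e e s).
  have eE := alphaV_E eA.
  case: (Eset_other eE se) => oe _ ee _.
  rewrite /pi_e se -ee; split => //.
  - by rewrite -sub1set (alphaV_mem eA se).
  - by rewrite -sub1set (alphaV_mem eA oe).
by rewrite gmulA; apply: IH.
Qed.


Lemma in_hedge_proj s g x : in_hedge S L iota s g x ->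
  approx S L iota x (proj x, s, g) /\ proj x \in s.
Proof.
case=> v [vs ax]; have [/= e _] := approx_R ax.
by rewrite /proj e.
Qed.

Lemma hedge_move B s g x u : in_hedge S L iota s g x -> proj x \in B ->
  all (fun e => e \in alphaV B) u -> walk s u ->
  in_hedge S L iota (pi_word u s) (g * geval u) x.
Proof.
move=> /in_hedge_proj [ax xs] xB uA uw.
have uA' : all (fun e => e \in alphaV [set proj x]) u.
  apply/allP => e /(allP uA); apply/subsetP/alphaV_mono; by rewrite sub1set.
exists (proj x); split.
  by rewrite -sub1set; apply: walk_sub uA' uw; rewrite sub1set.
exact: rst_trans ax (R_approx g uA' uw).
Qed.

Lemma hedge_link s g s' g' x : in_hedge S L iota s g x -> in_hedge S L iota s' g' x ->
  exists w, [/\ all (fun e => e \in alphaV [set proj x]) w, walk s w,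
              pi_word w s = s' & g' = g * geval w].
Proof.
move=> /in_hedge_proj [a1 _] /in_hedge_proj [a2 _].
have := approx_R (rst_trans _ _ _ _ _ (rst_sym _ _ _ _ a1) a2).
by case=> /= _ [w [wA wk pw e]]; exists w.
Qed.

Lemma in_hedge_self x : inX S x -> in_hedge S L iota x.1.2 x.2 x.
Proof.
case: x => [[v s] g] [/= sS vs]; exists v; split => //; exact: rst_refl.
Qed.

Variable N : nat.
Hypothesis Hcomp : compatible S L iota.
Hypothesis HN : N_acyclic S L iota N.

Lemma core n (Hn : 2 <= n <= N) (ss : 'I_n -> {set V}) (gs : 'I_n -> G) (Bs : 'I_n -> {set V}) :
  (forall i, ss i \in S) ->
  (forall i, exists w, [/\ all (fun e => e \in alphaV (Bs i)) w, walk (ss i) w,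
       pi_word w (ss i) = ss (ordS i) & gs (ordS i) = gs i * geval w]) ->
  (exists i, alphaV (Bs i) = Eset) \/
  exists i t h u u',
    [/\ all (fun e => e \in alphaV (Bs i) :&: alphaV (Bs (ord_pred i))) u, walk (ss i) u,
        pi_word u (ss i) = t & h = gs i * geval u] /\
    [/\ all (fun e => e \in alphaV (Bs i) :&: alphaV (Bs (ordS i))) u', walk (ss (ordS i)) u',
        pi_word u' (ss (ordS i)) = t & h = gs (ordS i) * geval u'].
Proof.
move=> sS hw.
case: (classic (exists i, alphaV (Bs i) = Eset)) => [h|hne]; [by left | right].
apply: NNPP => Hno; apply: (HN Hn (gs := gs) (als := fun i => alphaV (Bs i)) (ss := ss)).
split; first by case/andP: Hn.
move=> i; have [w [wA wk pw eg]] := hw i; split => //.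
- rewrite properEneq; apply/andP; split.
    by apply/eqP => e; apply: hne; exists i.
  by apply/subsetP => e /alphaV_E.
move=> h [u [uA uw ->]] [u' [u'A u'w e]]; apply: Hno.
exists i, (pi_word u (ss i)), (gs i * geval u), u, u'; split; split => //.
have uE : all (fun e => e \in Eset) u.
  by apply/allP => x /(allP uA); rewrite inE => /andP [/alphaV_E].
have u'E : all (fun e => e \in Eset) u'.
  by apply/allP => x /(allP u'A); rewrite inE => /andP [/alphaV_E].
have wE := alphaV_all wA.
have eu : geval u = geval w * geval u'.
  by apply: (@mulg_cancel _ L (gs i)); rewrite e eg gmulA.
have := Hcomp (w := w ++ u' ++ rev u) _ _ (sS i).
rewrite !pi_word_cat pw => H.
rewrite -H ?pi_word_Krev //.
  by rewrite !all_cat wE u'E all_rev.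
by rewrite !geval_cat gmulA -eu geval_revV.
Qed.


Lemma join_walk (X : {set {set {set V}}}) a b t u u' :
  X \subset Eset ->
  all (fun e => e \in X) u -> walk a u -> pi_word u a = t ->
  all (fun e => e \in X) u' -> walk b u' -> pi_word u' b = t ->
  [/\ all (fun e => e \in X) (u ++ rev u'), walk a (u ++ rev u'),
      pi_word (u ++ rev u') a = b & geval (u ++ rev u') = geval u * geval (rev u')].
Proof.
move=> XE uA uw pu u'A u'w pu'.
have u'E : all (fun e => e \in Eset) u'.
  by apply/allP => e /(allP u'A) /(subsetP XE).
split.
- by rewrite all_cat uA all_rev.
- by rewrite walk_cat uw pu -pu' walk_rev.
- by rewrite pi_word_cat pu -pu' pi_word_revK.
- exact: geval_cat.
Qed.

Lemma meet2 (HN2 : 2 <= N) s s' B C w w' :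
  s \in S ->
  all (fun e => e \in alphaV B) w -> walk s w -> pi_word w s = s' ->
  all (fun e => e \in alphaV C) w' -> walk s w' -> pi_word w' s = s' ->
  geval w = geval w' ->
  exists w'', [/\ all (fun e => e \in alphaV (B :|: C)) w'', walk s w'',
                  pi_word w'' s = s' & geval w'' = geval w].
Proof.
move=> sS wA ww pw w'A w'w pw' ge.
have wE := alphaV_all wA; have w'E := alphaV_all w'A.
have s'S : s' \in S by rewrite -pw walk_S.
rewrite alphaVU.
pose ss := fun i : 'I_2 => if val i == 0 then s else s'.
pose gs := fun i : 'I_2 => if val i == 0 then gone L else geval w.
pose Bs := fun i : 'I_2 => if val i == 0 then B else C.
have := @core 2 _ ss gs Bs.
case.
- by rewrite leqnn HN2.
- by case=> [[|[|k]] Hi].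
- case=> [[|[|k]] Hi] //.
    by exists w; rewrite /ss /gs /Bs /=; split => //; rewrite gmul1g.
  exists (rev w'); rewrite /ss /gs /Bs /=; split.
  + by rewrite all_rev.
  + by rewrite -pw' walk_rev.
  + by rewrite -pw' pi_word_revK.
  + by rewrite ge geval_revV.
- rewrite /ss /gs /Bs; case=> -[[|[|k]] Hi] //= eq.
  + exists w'; split => //.
    by apply/allP => e ew; rewrite inE (allP w'A) // eq (alphaV_E (allP w'A e ew)).
  + exists w; split => //.
    by apply/allP => e ew; rewrite inE (allP wA) // eq (alphaV_E (allP wA e ew)).
have XE : alphaV B :&: alphaV C \subset Eset.
  by apply/subsetP => e; rewrite inE => /andP [/alphaV_E].
rewrite /ss /gs /Bs; case=> -[[|[|k]] Hi] //; move=> [t [h [u [u' [[uA uw pu eh] [u'A u'w pu' eh']]]]]] /=; move: uA uw pu eh u'A u'w pu' eh' => /= uA uw pu eh u'A u'w pu' eh'.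
- have [A1 W1 P1 G1] := join_walk XE uA uw pu u'A u'w pu'.
  exists (u ++ rev u'); split => //.
  rewrite G1; rewrite (gmul1g L) in eh; rewrite -eh eh' -gmulA geval_revV ?mulg1' //.
  by apply/allP => e /(allP u'A); rewrite inE => /andP [/alphaV_E].
- rewrite setIC in uA; rewrite setIC in u'A.
  have [A1 W1 P1 G1] := join_walk XE u'A u'w pu' uA uw pu.
  exists (u' ++ rev u); split => //.
  rewrite G1; rewrite (gmul1g L) in eh'; rewrite -eh' eh -gmulA geval_revV ?mulg1' //.
  by apply/allP => e /(allP uA); rewrite inE => /andP [/alphaV_E].
Qed.


Lemma multi_seq (HN2 : 2 <= N) s s' x (l : seq V) : s \in S -> l != [::] ->
  (forall v, v \in l -> exists w, [/\ all (fun e => e \in alphaV [set v]) w, walk s w,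
                                  pi_word w s = s' & geval w = x]) ->
  exists w, [/\ all (fun e => e \in alphaV [set y | y \in l]) w, walk s w,
                pi_word w s = s' & geval w = x].
Proof.
move=> sS; elim: l => [//|v l IH] _ H.
have [w [wA ww pw gw]] := H v (mem_head _ _).
case: l IH H => [|v' l'] IH H.
  have -> : [set y | y \in [:: v]] = [set v] by apply/setP => y; rewrite !inE.
  by exists w.
have [w' [w'A w'w pw' gw']] : exists w, [/\ all (fun e => e \in alphaV [set y | y \in v' :: l']) w, walk s w,
                pi_word w s = s' & geval w = x].
  by apply: IH => // y yl; apply: H; rewrite inE yl orbT.
have [w'' [A W P Gw]] := meet2 HN2 sS wA ww pw w'A w'w pw' (etrans gw (esym gw')).
exists w''; split => //; last by rewrite Gw.
have -> : [set y | y \in [:: v, v' & l']] = [set v] :|: [set y | y \in v' :: l'] by apply/setP => y; rewrite !inE.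
done.
Qed.

Lemma multi (HN2 : 2 <= N) s s' x (B : {set V}) : s \in S -> B != set0 ->
  (forall v, v \in B -> exists w, [/\ all (fun e => e \in alphaV [set v]) w, walk s w,
                                  pi_word w s = s' & geval w = x]) ->
  exists w, [/\ all (fun e => e \in alphaV B) w, walk s w,
                pi_word w s = s' & geval w = x].
Proof.
move=> sS Bn H; rewrite -(set_enum B); apply: multi_seq => //.
  by case/set0Pn: Bn => y yB; apply/eqP => en; move: (mem_enum B y); rewrite en yB.
by move=> v; rewrite mem_enum; apply: H.
Qed.

Lemma allI1 (X Y : {set {set {set V}}}) u : all (fun e => e \in X :&: Y) u -> all (fun e => e \in X) u.
Proof. by move=> /allP h; apply/allP => e /h; rewrite inE => /andP []. Qed.
Lemma allI2 (X Y : {set {set {set V}}}) u : all (fun e => e \in X :&: Y) u -> all (fun e => e \in Y) u.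
Proof. by move=> /allP h; apply/allP => e /h; rewrite inE => /andP []. Qed.

Lemma chordless_false n (c : 'I_n -> Xel V G) : 4 <= n <= N ->
  ~ chordless_cycle S L iota c.
Proof.
case/andP=> n4 nN [cX cD cA cN].
have nonadj : forall j s g, s \in S -> in_hedge S L iota s g (c j) ->
    in_hedge S L iota s g (c (ordS (ordS j))) -> False.
  move=> j s g sS h1 h2; have [f1 f2 f3] := ordS_facts j n4.
  apply: (cN j (ordS (ordS j))) => //.
  split; first by apply: cD.
  by exists s, g.
have hch : forall i, exists p : {set V} * G, [/\ p.1 \in S, in_hedge S L iota p.1 p.2 (c i)
    & in_hedge S L iota p.1 p.2 (c (ordS i))].
  by move=> i; have [_ [s [g [sS [h1 h2]]]]] := cA i; exists (s, g).
pose f := fun i => proj1_sig (constructive_indefinite_description _ (hch i)).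
have Hf : forall i, [/\ (f i).1 \in S, in_hedge S L iota (f i).1 (f i).2 (c i)
    & in_hedge S L iota (f i).1 (f i).2 (c (ordS i))].
  by move=> i; rewrite /f; case: constructive_indefinite_description.
pose ss := fun i => (f i).1.
pose gs := fun i => (f i).2.
pose Bs := fun i => [set proj (c (ordS i))].
have := @core n _ ss gs Bs.
case.
- by rewrite nN (leq_trans _ n4).
- by move=> i; case: (Hf i).
- move=> i; have [_ _ h1] := Hf i; have [_ h2 _] := Hf (ordS i).
  exact: hedge_link h1 h2.
- case=> i eq; set j := ordS i.
  have [jS hj _] := Hf j.
  have [w [wA ww pw gw]] : exists w, [/\ all (fun e => e \in alphaV (Bs j)) w, walk (ss j) w,
       pi_word w (ss j) = ss (ordS j) & gs (ordS j) = gs j * geval w].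
    have [_ _ h1] := Hf j; have [_ h2 _] := Hf (ordS j).
    exact: hedge_link h1 h2.
  have wA' : all (fun e => e \in alphaV (Bs i)) w.
    by rewrite eq; apply: alphaV_all wA.
  have := hedge_move hj _ wA' ww; rewrite pw -gw => /(_ (set11 _)) h1.
  have [sS' _ h2] := Hf (ordS j).
  exact: nonadj h1 h2.
case=> i [t [h [u [u' [[uA uw pu eh] [u'A u'w pu' eh']]]]]].
have [iS hi _] := Hf i.
have [_ _ hi2] := Hf (ordS i).
have uA2 := allI2 uA; rewrite /Bs ord_predK in uA2.
have u'A2 := allI2 u'A.
have := hedge_move hi (set11 _) uA2 uw; rewrite pu -eh => h1.
have := hedge_move hi2 (set11 _) u'A2 u'w; rewrite pu' -eh' => h2.
have tS : t \in S.
  by rewrite -pu walk_S // (alphaV_all (allI1 uA)).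
exact: nonadj h1 h2.
Qed.

Lemma clique_sets (HN3 : 3 <= N) m (c : 'I_m -> Xel V G)
  (cC : forall i j, exists s g, [/\ s \in S, in_hedge S L iota s g (c i) & in_hedge S L iota s g (c j)]) :
  forall k (A : {set 'I_m}), #|A| <= k -> A != set0 ->
  exists s g, s \in S /\ forall i, i \in A -> in_hedge S L iota s g (c i).
Proof.
have HN2 : 2 <= N by apply: leq_trans HN3.
elim=> [|k IH] A.
  by rewrite leqn0 cards_eq0 => /eqP ->; rewrite eqxx.
move=> Ak An.
have [a aA] := set0Pn _ An.
case: (boolP (A \subset [set a])) => [sa|].
  have [s [g [sS h1 _]]] := cC a a.
  by exists s, g; split => // i /(subsetP sa); rewrite inE => /eqP ->.
case/subsetPn => b bA; rewrite inE => ba.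
case: (boolP (A \subset [set a; b])) => [sab|].
  have [s [g [sS h1 h2]]] := cC a b.
  by exists s, g; split => // i /(subsetP sab) /set2P [] ->.
case/subsetPn => d dA; rewrite !inE negb_or => /andP [da db].
pose av := fun i : 'I_3 => if val i == 0 then a else if val i == 1%N then b else d.
have avA : forall i, av i \in A by case=> [[|[|[|j]]] Hi].
have av_inj : injective av.
  move=> i j; case: i j => [[|[|[|i]]] Hi] // [[|[|[|j]]] Hj] //= e; try (by apply: val_inj);
  move: ba da db; rewrite /av /= in e; rewrite e ?eqxx //.
have hH : forall i, exists p : {set V} * G, p.1 \in S /\
    forall k0, k0 \in A :\ av i -> in_hedge S L iota p.1 p.2 (c k0).
  move=> i; have [] := IH (A :\ av i).
  - by rewrite -ltnS (leq_trans _ Ak) // (proper_card (properD1 (avA i))).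
  - apply/set0Pn; exists (av (ordS i)); rewrite !inE avA andbT (inj_eq av_inj).
    by have [_ _ h _ _] := ord3_facts i; rewrite eq_sym.
  - by move=> s [g [sS H]]; exists (s, g).
pose f := fun i => proj1_sig (constructive_indefinite_description _ (hH i)).
have Hf : forall i, (f i).1 \in S /\
    forall k0, k0 \in A :\ av i -> in_hedge S L iota (f i).1 (f i).2 (c k0).
  by move=> i; rewrite /f; case: constructive_indefinite_description.
pose ss := fun i => (f i).1.
pose gs := fun i => (f i).2.
pose Y := fun i => A :\ av i :\ av (ordS i).
pose Bs := fun i => [set proj (c k0) | k0 in Y i].
have YH : forall i k0, k0 \in Y i ->
    in_hedge S L iota (ss i) (gs i) (c k0) /\ in_hedge S L iota (ss (ordS i)) (gs (ordS i)) (c k0).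
  move=> i k0; rewrite !inE => /and3P [k1 k2 kA]; split; apply: (proj2 (Hf _)); by rewrite !inE ?k1 ?k2 kA.
have aY : forall i, av (ordS (ordS i)) \in Y i.
  move=> i; have [_ _ h1 h2 h3] := ord3_facts i; rewrite !inE avA andbT !(inj_eq av_inj).
  by apply/andP; split; rewrite eq_sym.
have hw : forall i, exists w, [/\ all (fun e => e \in alphaV (Bs i)) w, walk (ss i) w,
       pi_word w (ss i) = ss (ordS i) & gs (ordS i) = gs i * geval w].
  move=> i.
  have [] := @multi HN2 (ss i) (ss (ordS i)) (ginv L (gs i) * gs (ordS i)) (Bs i).
  - exact: (proj1 (Hf i)).
  - by apply/set0Pn; exists (proj (c (av (ordS (ordS i))))); apply/imsetP; exists (av (ordS (ordS i))).
  - move=> v /imsetP [k0 kY ->]; have [h1 h2] := YH i k0 kY.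
    have [w [wA ww pw gw]] := hedge_link h1 h2.
    by exists w; split => //; rewrite gw gmulA (gmulVg L) (gmul1g L).
  - by move=> w [wA ww pw gw]; exists w; split => //; rewrite gw gmulA mulgV' (gmul1g L).
have := @core 3 _ ss gs Bs (fun i => proj1 (Hf i)) hw.
case.
- by rewrite HN3.
- case=> i eq.
  have [w [wA ww pw gw]] := hw (ordS i).
  have [_ h2] := YH i _ (aY i).
  have wA' : all (fun e => e \in alphaV (Bs i)) w by rewrite eq; apply: alphaV_all wA.
  have kB : proj (c (av (ordS (ordS i)))) \in Bs i.
    by apply/imsetP; exists (av (ordS (ordS i))) => //; apply: aY.
  have := hedge_move h2 kB wA' ww; rewrite pw -gw => hh.
  exists (ss (ordS (ordS i))), (gs (ordS (ordS i))); split; first exact: (proj1 (Hf _)).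
  move=> k0 kA; case: (eqVneq k0 (av (ordS (ordS i)))) => [->|kn]; first exact: hh.
  by apply: (proj2 (Hf _)); rewrite !inE kn kA.
case=> i [t [h [u [u' [[uA uw pu eh] [u'A u'w pu' eh']]]]]].
have [ordS3 pred3 n1 n2 n3] := ord3_facts i.
rewrite pred3 -alphaVU in uA.
rewrite -alphaVU in u'A.
exists t, h; split.
  by rewrite -pu walk_S ?(proj1 (Hf i)) // (alphaV_all uA).
move=> k0 kA.
case: (eqVneq k0 (av i)) => [ki|kni].
  have := aY (ordS i); rewrite ordS3 -ki => kY.
  have [hk _] := YH _ _ kY.
  have kB : proj (c k0) \in Bs i :|: Bs (ordS i).
    by rewrite inE; apply/orP; right; apply/imsetP; exists k0.
  by have := hedge_move hk kB u'A u'w; rewrite pu' -eh'.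
have hk : in_hedge S L iota (ss i) (gs i) (c k0) by apply: (proj2 (Hf i)); rewrite !inE kni kA.
have kB : proj (c k0) \in Bs i :|: Bs (ordS (ordS i)).
  rewrite inE; case: (eqVneq k0 (av (ordS i))) => [kj|knj].
    apply/orP; right; apply/imsetP; exists k0 => //.
    have [e3 _ _ _ _] := ord3_facts (ordS i).
    by have := aY (ordS (ordS i)); rewrite e3 -kj.
  by apply/orP; left; apply/imsetP; exists k0 => //; rewrite !inE knj kni kA.
by have := hedge_move hk kB uA uw; rewrite pu -eh.
Qed.

End Basics.

Theorem mainTheorem12 (V : finType) (S : {set {set V}}) (G : Type)
    (L : group_law G) (iota : {set {set V}} -> G)
    (HEgrp : is_Egroup S L iota) (Hcomp : compatible S L iota) :
  (* pi is well defined on classes *)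
  (forall x y : Xel V G, inX S x -> approx S L iota x y -> proj x = proj y) /\
  (* pi maps every hyperedge [s,g] bijectively onto s *)
  (forall (s : {set V}) (g : G), s \in S ->
     (forall x, in_hedge S L iota s g x -> proj x \in s) /\
     (forall v, v \in s -> exists x, in_hedge S L iota s g x /\ proj x = v) /\
     (forall x y, in_hedge S L iota s g x -> in_hedge S L iota s g y ->
        proj x = proj y -> approx S L iota x y)) /\
  (forall N : nat, 3 <= N -> N_acyclic S L iota N ->
     (* (a) no chordless cycles of length 4..N *)
     (forall n (c : 'I_n -> Xel V G), 4 <= n <= N ->
        ~ chordless_cycle S L iota c) /\
     (* (b) every nonempty clique of size <= N lies in one hyperedge *)
     (forall m (c : 'I_m -> Xel V G), 0 < m <= N ->
        (forall i, inX S (c i)) ->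
        (forall i j, i != j -> gadj S L iota (c i) (c j)) ->
        exists s g, s \in S /\ forall i, in_hedge S L iota s g (c i))).
Proof.
case: HEgrp => _ _ Hinv _.
split.
  by move=> x y _ /(approx_R Hinv) [].
split.
  move=> s g sS; split; last split.
  - by move=> x /(in_hedge_proj Hinv) [].
  - move=> v vs; exists (v, s, g); split => //; exists v; split => //; exact: rst_refl.
  - move=> x y /(in_hedge_proj Hinv) [ax _] /(in_hedge_proj Hinv) [ay _] e.
    apply: (rst_trans _ _ _ _ _ ax); rewrite e.
    exact: rst_sym.
move=> N N3 HN; split.
- move=> n c nN; have := chordless_false Hinv Hcomp HN nN. done.
- move=> m c /andP [m0 _] cX cA.
  have cC : forall i j, exists s g, [/\ s \in S, in_hedge S L iota s g (c i)
      & in_hedge S L iota s g (c j)].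
    move=> i j; case: (eqVneq i j) => [<-|ij].
      have h := in_hedge_self L iota (cX i).
      by exists (c i).1.2, (c i).2; split => //; case: (cX i).
    by case: (cA i j ij) => _ [s [g [sS [h1 h2]]]]; exists s, g.
  have [] := clique_sets Hinv Hcomp HN N3 cC (k := #|[set: 'I_m]|) (A := setT) (leqnn _).
    by apply/set0Pn; exists (Ordinal m0); rewrite inE.
  by move=> s [g [sS H]]; exists s, g; split => // i; apply: H; rewrite inE.
Qed.
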